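(* Let $G$ be a $c$-edge-colored multigraph (without loops) with $n$ vertices such that every vertex is incident to at least two edges of different colors. If $\delta_{dym}(x)\ge (n+1)/2$ for every $x\in V(G)$, and at least one vertex is incident to at least three edges of pairwise different colors, then $G$ has a properly colored hamiltonian cycle.
   Context: A $c$-edge-colored multigraph is a finite multigraph without loops (parallel edges allowed) together with a map $\phi:E(G)\to\{1,\ldots,c\}$. For $u,v\in V(G)$, $E_{uv}$ is the set of edges with end vertices $u$ and $v$. Here $\delta_{dym}(x)$ is the number of vertices $y$ such that $E_{xy}$ contains two edges of different colors. A properly colored (PC) hamiltonian cycle is a cyclic sequence $(x_1,f_1,x_2,f_2,\ldots,x_n,f_n,x_1)$ containing every vertex exactly once, with $f_i\in E_{x_ix_{i+1}}$ (indices mod $n$), such that any two consecutive edges, including $f_n$ and $f_1$, have different colors. *)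

(* Defs.v *)
From mathcomp Require Import all_boot.
Set Implicit Arguments. Unset Strict Implicit. Unset Printing Implicit Defensive.

(* A c-edge-colored loopless multigraph: vertex type V, edge type E (parallel
   edges allowed, as distinct elements of E), endpoints [ends e] a 2-element
   set of vertices, and colouring [phi : E -> 'I_c] (colours 1..c encoded as
   0..c-1). *)
Section Multigraph.
Variables (V E : finType) (c : nat) (ends : E -> {set V}) (phi : E -> 'I_c).

Definition loopless : Prop := forall e : E, #|ends e| = 2.

Definition E_between (u v : V) : {set E} := [set e | ends e == [set u; v]].

Definition delta_dym (x : V) : nat :=
  #|[set y : V | [exists e1 in E_between x y, exists e2 in E_between x y,
                   phi e1 != phi e2]]|.

Definition incident (x : V) (e : E) : bool := x \in ends e.

Definition two_colors_at (x : V) : Prop :=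
  exists e1 e2, [/\ incident x e1, incident x e2 & phi e1 != phi e2].

Definition three_colors_at (x : V) : Prop :=
  exists e1 e2 e3, [/\ incident x e1, incident x e2, incident x e3 &
    [&& phi e1 != phi e2, phi e1 != phi e3 & phi e2 != phi e3]].

(* PC hamiltonian cycle (x_1,f_1,...,x_n,f_n,x_1) with n = |V|: the x_i are
   all distinct (hence every vertex exactly once), f_i in E_{x_i x_{i+1}}
   (indices mod n), consecutive edges (including f_n, f_1) differently coloured. *)
Definition PC_hamiltonian_cycle : Prop :=
  exists (x : 'I_#|V| -> V) (f : 'I_#|V| -> E),
    [/\ injective x,
        forall i, f i \in E_between (x i) (x (ordS i)) &
        forall i, phi (f i) != phi (f (ordS i))].
End Multigraph.

(* Main.v *)
Require Import Defs.
From mathcomp Require Import all_boot zify.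
Set Implicit Arguments. Unset Strict Implicit. Unset Printing Implicit Defensive.


Section Seqs.
Variable T : eqType.

Fixpoint cp (x : T) (s : seq T) : seq (T * T) :=
  if s is y :: s' then (x, y) :: cp y s' else [::].

Lemma cp_cat x s1 s2 : cp x (s1 ++ s2) = cp x s1 ++ cp (last x s1) s2.
Proof. by elim: s1 x => //= y s1 IH x; rewrite IH. Qed.

Lemma size_cp x s : size (cp x s) = size s.
Proof. by elim: s x => //= y s IH x; rewrite IH. Qed.

Lemma map_fst_cp x s : map fst (cp x s) = belast x s.
Proof. by elim: s x => //= y s IH x; rewrite IH. Qed.

Lemma map_snd_cp x s : map snd (cp x s) = s.
Proof. by elim: s x => //= y s IH x; rewrite IH. Qed.

Lemma last_rev_belast (x : T) (s : seq T) : last (last x s) (rev (belast x s)) = x.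
Proof. by case: s => [|y s] //=; rewrite rev_cons last_rcons. Qed.

Lemma cp_rev (x : T) (s : seq T) :
  cp (last x s) (rev (belast x s)) = map (fun pr => (pr.2, pr.1)) (rev (cp x s)).
Proof.
elim: s x => [|y s IH] x //=.
rewrite rev_cons -cats1 cp_cat IH last_rev_belast /= rev_cons -cats1 map_cat.
by [].
Qed.

Lemma mem_cp_split x s p p' : (p, p') \in cp x s ->
  exists s1 s3, s = s1 ++ p' :: s3 /\ last x s1 = p.
Proof.
elim: s x => [|y s IH] x //=; rewrite in_cons => /orP [/eqP [-> ->]|].
  by exists [::], s.
move=> /IH [s1 [s3 [-> <-]]]; by exists (y :: s1), s3.
Qed.

Lemma path_cp (e : rel T) x s : path e x s = all (fun pr => e pr.1 pr.2) (cp x s).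
Proof. by elim: s x => //= y s IH x; rewrite IH. Qed.

Lemma nth_cp d x s i : i < size s -> nth (d, d) (cp x s) i = (nth d (x :: s) i, nth d s i).
Proof.
elim: s x i => [|y s IH] x [|i] //= Hi.
by rewrite IH.
Qed.

Lemma cp_uniq (x : T) (s : seq T) : uniq s -> uniq (cp x s).
Proof. by move=> Hs; apply: (@map_uniq _ _ snd); rewrite map_snd_cp. Qed.

End Seqs.


Section Fin.
Variable V : finType.

Lemma full_mem (w : seq V) : uniq w -> size w = #|V| -> forall x, x \in w.
Proof.
move=> Hu Hs x; apply/negPn/negP => Hx.
have Hu' : uniq (x :: w) by rewrite /= Hx.
move/card_uniqP: Hu'; rewrite /= Hs => H.
have := max_card (mem (x :: w)); rewrite H; by rewrite ltnn.
Qed.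

Lemma count_full (w : seq V) (P : pred V) : uniq w -> size w = #|V| ->
  count P w = #|[set y | P y]|.
Proof.
move=> Hu Hs; rewrite -size_filter.
have /card_uniqP <- : uniq (filter P w) by rewrite filter_uniq.
apply: eq_card => y; rewrite mem_filter inE full_mem //; by rewrite andbT.
Qed.

End Fin.


Section Graph.
Variable V : finType.
Variable h : rel V.
Hypothesis hsym : symmetric h.
Hypothesis hirr : irreflexive h.
Hypothesis hdeg : forall x, #|V|.+1 <= 2 * #|[set y | h x y]|.

Definition nb (x : V) (s : seq V) := count (fun pr => ~~ h pr.1 pr.2) (cp x s).

Lemma rev_cons_last (b0 : V) beta :
  rev (b0 :: beta) = last b0 beta :: rev (belast b0 beta).
Proof. by rewrite lastI rev_rcons. Qed.

Lemma two_opt x A (b0 : V) beta c0 gamma :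
  h (last x A) (last b0 beta) -> h b0 c0 ->
  nb x (A ++ rev (b0 :: beta) ++ c0 :: gamma) + (~~ h (last x A) b0)
     + (~~ h (last b0 beta) c0)
  = nb x (A ++ (b0 :: beta) ++ c0 :: gamma).
Proof.
move=> H1 H2; rewrite /nb rev_cons_last.
rewrite !cp_cat /= cp_rev last_rev_belast.
rewrite !count_cat /= !count_cat /= count_map count_rev H1 H2 /=.
have -> : count (preim (fun pr : V * V => (pr.2, pr.1)) (fun pr => ~~ h pr.1 pr.2))
            (cp b0 beta) = count (fun pr => ~~ h pr.1 pr.2) (cp b0 beta).
  by apply: eq_count => -[a b] /=; rewrite hsym.
lia.
Qed.

Definition hp (u v : V) (s : seq V) := [&& uniq (u :: s), size (u :: s) == #|V| & last u s == v].

Lemma hp_rev (u v : V) A B (c0 : V) gamma : hp u v (A ++ B ++ c0 :: gamma) ->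
  hp u v (A ++ rev B ++ c0 :: gamma).
Proof.
case/and3P=> H1 H2 H3; apply/and3P; split.
- rewrite (perm_uniq (s2 := u :: A ++ B ++ c0 :: gamma)) //.
  apply/permP => a /=; rewrite !count_cat count_rev; by [].
- by rewrite /= !size_cat size_rev -!size_cat.
- by move: H3; rewrite !last_cat /=.
Qed.

Lemma deg_count x (w : seq V) : uniq w -> size w = #|V| ->
  count (h x) w = #|[set y | h x y]|.
Proof. exact: count_full. Qed.

Lemma HC_step (u v : V) s : hp u v s -> 0 < nb u s ->
  exists s', hp u v s' /\ nb u s' < nb u s.
Proof.
move=> Hs Hnb; have /and3P [Hu /eqP Hsz /eqP Hl] := Hs.
have := Hnb; rewrite /nb -has_count => /hasP [[x1 y1] Hin /= Hbad].
have [s1 [s3 [Es Hx1]]] := mem_cp_split Hin.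
set l := cp u s.
pose Q1 := fun pr : V * V => h x1 pr.1.
pose Q2 := fun pr : V * V => h y1 pr.2.
have C1 : #|[set y | h x1 y]| <= count Q1 l + 1.
  rewrite -(deg_count x1 Hu Hsz) lastI -cats1 count_cat /= -map_fst_cp count_map.
  have -> : count (preim fst (h x1)) (cp u s) = count Q1 l by [].
  by case: (h x1 _); lia.
have C2 : #|[set y | h y1 y]| <= count Q2 l + 1.
  rewrite -(deg_count y1 Hu Hsz) /=.
  have -> : count (h y1) s = count Q2 l by rewrite /l -{1}(map_snd_cp u s) count_map.
  by case: (h y1 u); lia.
have Csz : (size l).+1 = #|V| by rewrite size_cp -Hsz.
have C3 : 0 < count (predC (predU Q1 Q2)) l.
  rewrite -has_count; apply/hasP; exists (x1, y1) => //.
  by rewrite /= /Q1 /Q2 /= !hirr.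
have C4 := count_predUI Q1 Q2 l.
have C5 : count (predU Q1 Q2) l + count (predC (predU Q1 Q2)) l + 1 = #|V|
  by rewrite count_predC -Csz addn1.
have := hdeg x1; have := hdeg y1 => D1 D2.
have : 0 < count (predI Q1 Q2) l by lia.
rewrite -has_count => /hasP [[p p'] Hin2 /andP [/= Hp Hp']].
rewrite /Q1 /Q2 /= in Hp Hp'.
rewrite /l Es cp_cat Hx1 mem_cat in_cons in Hin2.
case/or3P: Hin2 => [Hin2|/eqP [E1 E2]|Hin2].
-
  have [t1 [t3 [Es1 Hp1]]] := mem_cp_split Hin2.
  have Hx1' : last p' t3 = x1 by rewrite -Hx1 Es1 last_cat Hp1.
  exists (t1 ++ rev (p' :: t3) ++ y1 :: s3); split.
    by apply: hp_rev; rewrite catA -Es1 -Es.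
  have G1 : h (last u t1) (last p' t3) by rewrite Hp1 Hx1' hsym.
  have G2 : h p' y1 by rewrite hsym.
  have E := two_opt s3 G1 G2.
  have Es' : s = t1 ++ (p' :: t3) ++ y1 :: s3 by rewrite Es Es1 -catA.
  rewrite Hx1' Hbad -Es' /= in E.
  change (nb u (t1 ++ rev (p' :: t3) ++ y1 :: s3) < nb u s).
  by rewrite -E -addnA addn1 addnS ltnS leq_addr.
- by move: Hp; rewrite E1 hirr.
-
  have [t1 [t3 [Es3 Hp1]]] := mem_cp_split Hin2.
  have Es' : s = s1 ++ (y1 :: t1) ++ p' :: t3 by rewrite Es Es3.
  exists (s1 ++ rev (y1 :: t1) ++ p' :: t3); split.
    by apply: hp_rev; rewrite -Es'.
  have G1 : h (last u s1) (last y1 t1) by rewrite Hp1 Hx1.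
  have E := two_opt t3 G1 Hp'.
  rewrite Hx1 Hbad -Es' /= in E.
  change (nb u (s1 ++ rev (y1 :: t1) ++ p' :: t3) < nb u s).
  by rewrite -E -addnA addnS ltnS leq_addr.
Qed.

Lemma nb0_path (u : V) s : nb u s = 0 -> path h u s.
Proof.
move=> H; rewrite path_cp all_count.
have := count_predC (fun pr : V * V => h pr.1 pr.2) (cp u s).
have -> : count (predC (fun pr : V * V => h pr.1 pr.2)) (cp u s) = nb u s by [].
by rewrite H addn0 => ->.
Qed.

Lemma HC (u v : V) : u != v ->
  exists s, [/\ uniq (u :: s), size (u :: s) = #|V|, last u s = v & path h u s].
Proof.
move=> uv.
suff: forall k s, hp u v s -> nb u s <= k -> exists s, hp u v s && path h u s.
  pose s0 := rcons [seq y <- enum V | (y != u) && (y != v)] v.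
  have H0 : hp u v s0.
    have U : uniq (u :: s0).
      rewrite /= /s0 rcons_uniq mem_rcons !in_cons !mem_filter (negbTE uv) !eqxx /= !andbF /=.
      by rewrite filter_uniq ?enum_uniq.
    apply/and3P; split => //; last by rewrite /s0 last_rcons.
    move/card_uniqP: (U) => <-; rewrite cardT -(eq_cardT (A := mem (u :: s0))) //.
    move=> y; rewrite !inE /s0 mem_rcons !in_cons mem_filter mem_enum.
    by case: (y =P u); case: (y =P v).
  move=> /(_ _ s0 H0 (leqnn _)) [s /andP [/and3P [? /eqP ? /eqP ?] ?]].
  by exists s.
elim=> [|k IH] s Hs Hk.
  by exists s; rewrite Hs nb0_path //; apply/eqP; rewrite -leqn0.
case: (posnP (nb u s)) => H0.
  by exists s; rewrite Hs nb0_path.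
have [s' [Hs' Hlt]] := HC_step Hs H0.
apply: (IH s' Hs'); lia.
Qed.

Lemma Ore (x : V) s (m : V * V) : uniq (x :: s) -> size (x :: s) = #|V| -> path h x s ->
  exists t1 Y, [/\ s = t1 ++ Y, cycle h (x :: t1 ++ rev Y) &
                   (Y == [::]) || ((last x t1, head x Y) != m)].
Proof.
move=> Hu Hsz Hp; set b := last x s.
case: (boolP (h b x)) => Hbx.
  by exists s, [::]; rewrite cats0 /= rcons_path Hp Hbx.
set l := cp x s.
pose Q1 := fun pr : V * V => h b pr.1.
pose Q2 := fun pr : V * V => h x pr.2.
have C1 : #|[set y | h b y]| = count Q1 l.
  rewrite -(deg_count b Hu Hsz) lastI -cats1 count_cat /= -map_fst_cp count_map -/b.
  rewrite hirr /= !addn0; reflexivity.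
have C2 : #|[set y | h x y]| = count Q2 l.
  rewrite -(deg_count x Hu Hsz) /= hirr.
  by rewrite /l -{1}(map_snd_cp x s) count_map.
have Csz : (size l).+1 = #|V| by rewrite size_cp -Hsz.
have C4 := count_predUI Q1 Q2 l.
have C5 : count (predU Q1 Q2) l + 1 <= #|V| by rewrite -Csz addn1 ltnS count_size.
have := hdeg x; have := hdeg b => D1 D2.
have C6 : 1 < size (filter (predI Q1 Q2) l) by rewrite size_filter; lia.
have : has (predC (pred1 m)) (filter (predI Q1 Q2) l).
  apply/hasPn => H.
  have : size (filter (predI Q1 Q2) l) <= size [:: m].
    apply: uniq_leq_size; first by rewrite filter_uniq // cp_uniq //; case/andP: Hu.
    move=> z Hz; have := H z Hz; rewrite /= negbK inE; by [].
  by rewrite /=; lia.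
move=> /hasP [[p p'] ]; rewrite mem_filter => /andP [/andP [/= Hp1 Hp2] Hin] Hm.
rewrite /Q1 /Q2 /= in Hp1 Hp2.
have [t1 [t3 [Es Hpl]]] := mem_cp_split Hin.
exists t1, (p' :: t3); split => //; last by rewrite /= Hpl.
have Hb : last p' t3 = b by rewrite /b Es last_cat Hpl.
move: Hp; rewrite Es cat_path Hpl /= => /andP [Hpt1 /andP [Hpp' Hpt3]].
rewrite rev_cons_last Hb /= rcons_cat cat_path Hpt1 Hpl /= rcons_path.
rewrite hsym Hp1 /=.
have -> : last b (rev (belast p' t3)) = p' by rewrite -Hb last_rev_belast.
rewrite hsym Hp2 andbT -Hb rev_path.
by rewrite (eq_path (e' := h)) // => z w; rewrite hsym.
Qed.

End Graph.


Lemma cD (T : finType) (A : {set T}) d : 1 < #|A| -> 0 < #|A :\ d|.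
Proof. rewrite (cardsD1 d A); case: (d \in A) => /=; lia. Qed.
Lemma cD2 (T : finType) (A : {set T}) d : 2 < #|A| -> 1 < #|A :\ d|.
Proof. rewrite (cardsD1 d A); case: (d \in A) => /=; lia. Qed.

Section Main.
Variables (V E : finType) (c : nat) (ends : E -> {set V}) (phi : E -> 'I_c).
Hypothesis Hll : loopless ends.

Definition dyn (x y : V) : bool :=
  [exists e1 in E_between ends x y, exists e2 in E_between ends x y, phi e1 != phi e2].
Definition Lst (x y : V) : {set 'I_c} := phi @: E_between ends x y.

Lemma Eb_sym x y : E_between ends x y = E_between ends y x.
Proof. by apply/setP => e; rewrite !inE setUC. Qed.

Lemma Eb_irr x : E_between ends x x = set0.
Proof.
apply/setP => e; rewrite !inE; apply/negP => /eqP H.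
by have := Hll e; rewrite H setUid cards1.
Qed.

Lemma dyn_sym : symmetric dyn.
Proof. by move=> x y; rewrite /dyn Eb_sym. Qed.

Lemma dyn_irr : irreflexive dyn.
Proof.
move=> x; apply/negbTE; rewrite /dyn Eb_irr; apply/negP; case/existsP => e; by rewrite inE.
Qed.

Lemma Lst_sym x y : Lst x y = Lst y x.
Proof. by rewrite /Lst Eb_sym. Qed.

Lemma dyn_Lst x y : dyn x y -> 1 < #|Lst x y|.
Proof.
case/existsP => e1 /andP [H1 /existsP [e2 /andP [H2 N]]].
apply/card_gt1P; exists (phi e1), (phi e2); split => //; exact: imset_f.
Qed.

Lemma LstP x y col : reflect (exists2 e, e \in E_between ends x y & phi e = col) (col \in Lst x y).
Proof.
apply: (iffP imsetP) => [[e He ->]|[e He <-]]; by exists e.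
Qed.

Lemma nth_rcons_rot (vd : V) z s i : i < size (z :: s) ->
  nth vd (rcons s z) i = nth vd (z :: s) (i.+1 %% size (z :: s)).
Proof.
move=> Hi; rewrite nth_rcons; case: (ltnP i (size s)) => H.
  by rewrite modn_small.
have Ei : i = size s by move: Hi => /=; lia.
by rewrite Ei eqxx /= modnn.
Qed.

Lemma PC_of_seq (vd : V) (ed : E) (z : V) (s : seq V) (es : seq E) :
  uniq (z :: s) -> size (z :: s) = #|V| -> size es = #|V| ->
  (forall i, i < #|V| ->
     nth ed es i \in E_between ends (nth vd (z :: s) i) (nth vd (rcons s z) i)) ->
  (forall i, i < #|V| -> phi (nth ed es i) != phi (nth ed es (i.+1 %% #|V|))) ->
  PC_hamiltonian_cycle ends phi.
Proof.
move=> Hu Hsz Hes HE HC.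
exists (fun i : 'I_#|V| => nth vd (z :: s) i), (fun i : 'I_#|V| => nth ed es i).
split.
- move=> i j /eqP; rewrite nth_uniq ?Hsz // => /eqP; exact: val_inj.
- move=> i; have := HE i (ltn_ord i); rewrite nth_rcons_rot ?Hsz //.
- move=> i; exact: HC (ltn_ord i).
Qed.

Lemma Fcol (vd : V) (ed : E) (z : V) (s : seq V) (A : {set 'I_c}) (d : 'I_c) :
  path dyn z s -> s != [::] -> A \subset Lst z (head z s) -> 1 < #|A| ->
  exists es : seq E, [/\ size es = size s,
     forall i, i < size s -> nth ed es i \in E_between ends (nth vd (z :: s) i) (nth vd s i),
     forall i, i.+1 < size s -> phi (nth ed es i) != phi (nth ed es i.+1),
     phi (nth ed es 0) \in A &
     phi (nth ed es (size s).-1) != d].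
Proof.
elim: s z A => [|y s IH] z A //= /andP [Hzy Hp] _ HA HA2.
case: s IH Hp => [|y' s] IH Hp.
  have := cD d HA2.
  case/card_gt0P => col; rewrite !inE => /andP [Hcd HcA].
  have /LstP [e He Hec] : col \in Lst z y by apply: (subsetP HA).
  exists [:: e]; split => //; try (by case); by rewrite /= Hec.
have [es' [Hsz Hnth Hcol H0 Hl]] :=
  IH y (Lst y y') Hp isT (subxx _) (dyn_Lst (proj1 (andP Hp))).
set k := phi (nth ed es' 0).
have := cD k HA2.
case/card_gt0P => col; rewrite !inE => /andP [Hck HcA].
have /LstP [e He Hec] : col \in Lst z y by apply: (subsetP HA).
exists (e :: es'); split.
- by rewrite /= Hsz.
- by case.
- case => [|i] Hi /=; first by rewrite Hec.
  exact: Hcol.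
- by rewrite /= Hec.
- by move: Hl; rewrite /=.
Qed.

Lemma GC (vd : V) (ed : E) z s (c0 : 'I_c) :
  uniq (z :: s) -> size (z :: s) = #|V| -> path dyn z s -> s != [::] ->
  c0 \in Lst (last z s) z -> 1 < #|Lst z (head z s) :\ c0| ->
  PC_hamiltonian_cycle ends phi.
Proof.
move=> Hu Hsz Hp Hne Hc HA.
have [es [Hes Hnth Hcol H0 Hl]] :=
  Fcol vd ed (A := Lst z (head z s) :\ c0) c0 Hp Hne (subsetDl _ _) HA.
case/LstP: Hc => es0 He0 Hc0.
have Hn : #|V| = (size s).+1 by rewrite -Hsz.
have Hs0 : 0 < size s by move: Hne; case: (s).
apply: (@PC_of_seq vd ed z s (rcons es es0) Hu Hsz).
- by rewrite size_rcons Hes Hn.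
- move=> i; rewrite Hn ltnS leq_eqVlt => /orP [/eqP ->|Hi].
    rewrite nth_rcons Hes ltnn eqxx /= nth_rcons ltnn eqxx.
    have -> : nth vd (z :: s) (size s) = last z s.
      by have := nth_last vd (z :: s).
    by [].
  rewrite nth_rcons Hes Hi nth_rcons Hi; exact: Hnth.
- move=> i; rewrite Hn ltnS leq_eqVlt => /orP [/eqP ->|Hi].
    rewrite modnn nth_rcons Hes ltnn eqxx nth_rcons Hes Hs0 Hc0.
    move: H0; rewrite !inE => /andP [H _]; by rewrite eq_sym.
  rewrite modn_small; last by lia.
  rewrite nth_rcons Hes Hi.
  move: Hi; rewrite leq_eqVlt => /orP [/eqP Ei|Hi].
    rewrite nth_rcons Hes -Ei ltnn eqxx Hc0.
    by move: Hl; rewrite -Ei /=.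
  rewrite nth_rcons Hes Hi; exact: Hcol.
Qed.

Definition pe (ed : E) (x y : V) (col : 'I_c) : E :=
  odflt ed [pick e in E_between ends x y | phi e == col].

Lemma pe_spec ed x y col : col \in Lst x y ->
  pe ed x y col \in E_between ends x y /\ phi (pe ed x y col) = col.
Proof.
case/LstP => e He Hc; rewrite /pe; case: pickP => [e' /andP [H1 /eqP H2]|] //=.
by move=> /(_ e); rewrite He Hc eqxx.
Qed.

Lemma GCeven (vd : V) (ed : E) z s (a b : 'I_c) :
  uniq (z :: s) -> size (z :: s) = #|V| -> ~~ odd #|V| -> a != b ->
  (forall pr, pr \in cp z (rcons s z) -> (a \in Lst pr.1 pr.2) && (b \in Lst pr.1 pr.2)) ->
  PC_hamiltonian_cycle ends phi.
Proof.
move=> Hu Hsz Hev Hab Hall.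
pose col i := if odd i then b else a.
pose es := mkseq (fun i => pe ed (nth vd (z :: s) i) (nth vd (rcons s z) i) (col i)) #|V|.
have Hmem : forall i, i < #|V| ->
    col i \in Lst (nth vd (z :: s) i) (nth vd (rcons s z) i).
  move=> i Hi.
  have Hi' : i < size (rcons s z) by rewrite size_rcons; move: Hi; rewrite -Hsz.
  have := Hall _ (@mem_nth _ (vd, vd) (cp z (rcons s z)) i _).
  rewrite size_cp nth_cp // => /(_ Hi') /andP [Ha Hb].
  have Ez : nth vd (z :: rcons s z) i = nth vd (z :: s) i.
    by rewrite -rcons_cons nth_rcons Hsz Hi.
  by rewrite Ez in Ha Hb; rewrite /col; case: (odd i).
have Hn0 : 0 < #|V| by rewrite -Hsz.
apply: (@PC_of_seq vd ed z s es Hu Hsz).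
- by rewrite size_mkseq.
- move=> i Hi; rewrite nth_mkseq //; exact: (pe_spec ed (Hmem i Hi)).1.
- move=> i Hi; rewrite !nth_mkseq ?ltn_pmod //.
  rewrite (pe_spec ed (Hmem i Hi)).2 (pe_spec ed (Hmem _ (ltn_pmod _ Hn0))).2.
  rewrite /col; case: (ltnP i.+1 #|V|) => H.
    rewrite modn_small //=; case: (odd i) => //; by rewrite eq_sym.
  have Ei : i.+1 = #|V| by lia.
  rewrite Ei modnn /=.
  have : odd i by move: Hev; rewrite -Ei /= negbK.
  by move=> ->; rewrite eq_sym.
Qed.

Lemma neqL (L1 L2 : {set 'I_c}) : 1 < #|L1| -> 1 < #|L2| -> L1 != L2 ->
  exists c0, c0 \in L1 /\ 1 < #|L2 :\ c0|.
Proof.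
move=> H1 H2 N.
case: (boolP (L1 \subset L2)) => Hs.
  have : L1 \proper L2 by rewrite properEneq N Hs.
  move/proper_card => Hlt.
  have : 0 < #|L1| by lia.
  case/card_gt0P => c0 Hc0; exists c0; split => //.
  apply: cD2; lia.
case/subsetPn: Hs => c0 Hc0 Hn; exists c0; split => //.
by move: H2; rewrite (cardsD1 c0 L2) (negbTE Hn).
Qed.

Lemma GCtri (vd : V) (ed : E) W W1 W2 a1 a2 a3 :
  uniq W -> size W = #|V| -> cycle dyn W -> W = W1 ++ a1 :: a2 :: a3 :: W2 ->
  Lst a1 a2 != Lst a2 a3 -> PC_hamiltonian_cycle ends phi.
Proof.
move=> Hu Hsz Hc EW N.
have ER : rot (size (rcons W1 a1)) W = a2 :: (a3 :: W2 ++ rcons W1 a1).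
  by rewrite EW -cat_rcons rot_size_cat.
have Hc' : path dyn a2 (rcons (a3 :: W2 ++ rcons W1 a1) a2).
  have := Hc; rewrite -(rot_cycle (size (rcons W1 a1))) ER; by [].
have Hu' := Hu; rewrite -(rot_uniq (size (rcons W1 a1))) ER in Hu'.
have Hsz' := Hsz; rewrite -(size_rot (size (rcons W1 a1))) ER in Hsz'.
move: Hc'; rewrite rcons_path => /andP [Hp Hl].
rewrite /= last_cat last_rcons in Hl.
move: (Hp) => /= /andP [H23 _].
have [c0 [Hc0 Hcard]] := neqL (dyn_Lst Hl) (dyn_Lst H23) N.
apply: (GC vd ed Hu' Hsz' Hp isT _ Hcard).
by rewrite /= last_cat last_rcons.
Qed.

Lemma walk_split (x : V) t :
  (exists T1 T2 a1 a2 a3, x :: t = T1 ++ a1 :: a2 :: a3 :: T2 /\ Lst a1 a2 != Lst a2 a3)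
  \/ (forall pr, pr \in cp x t -> Lst pr.1 pr.2 = Lst x (head x t)).
Proof.
elim: t x => [|y t IH] x; first by right.
case: (IH y) => [[T1 [T2 [a1 [a2 [a3 [Ew N]]]]]]|H].
  by left; exists (x :: T1), T2, a1, a2, a3; rewrite Ew.
case: t IH H => [|y' t] IH H.
  by right => pr; rewrite inE => /eqP ->.
case: (eqVneq (Lst x y) (Lst y y')) => Exy.
  right => pr; rewrite /= in_cons => /orP [/eqP -> //|Hin].
  by rewrite (H _ Hin) /= -Exy.
by left; exists [::], t, x, y, y'.
Qed.

End Main.


Lemma cat_split (T : Type) (X Y A B : seq T) : X ++ Y = A ++ B ->
  (exists m, X = A ++ m /\ B = m ++ Y) \/ (exists m, A = X ++ m /\ Y = m ++ B).
Proof.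
elim: X A => [|x X IH] [|a A] /=.
- by move=> ->; left; exists [::].
- by move=> ->; right; exists (a :: A).
- by move=> <-; left; exists (x :: X).
- by case=> -> /IH [[m [-> ->]]|[m [-> ->]]]; [left|right]; exists m.
Qed.

Lemma last_rev (T : Type) (x : T) S : last x (rev S) = head x S.
Proof. by case: S => [|t S] //=; rewrite rev_cons last_rcons. Qed.

Section Final.
Variables (V E : finType) (c : nat) (ends : E -> {set V}) (phi : E -> 'I_c).
Hypothesis Hll : loopless ends.
Hypothesis hdeg : forall x, #|V|.+1 <= 2 * #|[set y | dyn ends phi x y]|.

Local Notation h := (dyn ends phi).
Local Notation L := (Lst ends phi).

Lemma case_a (vd : V) (ed : E) x0 s w :
  uniq (x0 :: s) -> size (x0 :: s) = #|V| -> path h x0 s ->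
  (forall pr, pr \in cp x0 (rcons s x0) -> L pr.1 pr.2 = L x0 (head x0 s)) ->
  h x0 w -> L x0 w != L x0 (head x0 s) -> PC_hamiltonian_cycle ends phi.
Proof.
move=> Hu Hsz Hp Hall Hw N.

have dsym := dyn_sym ends phi.
have dirr := dyn_irr phi Hll.
have Hws : w \in s.
  have := full_mem Hu Hsz w; rewrite in_cons => /orP [/eqP Ew|//].
  by move: Hw; rewrite Ew dirr.
move: Hu Hsz Hp Hall N; case/splitPr: Hws => s1 s2 Hu Hsz Hp Hall N.
case/lastP: s1 Hu Hsz Hp Hall N => [|S r0] Hu Hsz Hp Hall N.
  by rewrite /= eqxx in N.
case: s2 Hu Hsz Hp Hall N => [|q' s2'] Hu Hsz Hp Hall N.
  have := Hall (w, x0); rewrite -cats1 cp_cat mem_cat last_cat /= in_cons eqxx orbT.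
  by move=> /(_ isT) /= E1; move: N; rewrite Lst_sym E1 eqxx.
have Hhd : head x0 (rcons S r0 ++ [:: w, q' & s2']) = head r0 S by case: S {Hu Hsz Hp Hall N}.
rewrite Hhd in Hall N.
set L0 := L x0 (head r0 S) in Hall N.
set qq := last r0 (rev S).
have Hqq : L qq x0 = L0 by rewrite /qq last_rev Lst_sym.
have Hwq : L w q' = L0.
  apply: (Hall (w, q')).
  by rewrite rcons_cat cp_cat mem_cat /= last_rcons !in_cons eqxx !orbT.
set rt := rcons (rev S) x0 ++ [:: w, q' & s2'].
have Hperm : perm_eq (r0 :: rt) (x0 :: rcons S r0 ++ [:: w, q' & s2']).
  apply/permP => a; rewrite /rt /= -!cats1 !count_cat count_rev /=.
  lia.
have HRu : uniq (r0 :: rt) by rewrite (perm_uniq Hperm).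
have HRsz : size (r0 :: rt) = #|V| by rewrite (perm_size Hperm).
have HRp : path h r0 rt.
  move: Hp; rewrite cat_path last_rcons => /andP [Hp1 Hp2].
  move: Hp2 => /= /andP [_ Hp2]; rewrite /rt cat_path last_rcons /= Hw Hp2 !andbT.
  have := rev_path h x0 (rcons S r0); rewrite last_rcons belast_rcons rev_cons => ->.
  by rewrite (eq_path (e' := h)) // => a b; rewrite dsym.
have [t1 [Y [Ert Hcyc Hcond]]] := Ore dsym dirr hdeg (x0, w) HRu HRsz HRp.
set A := r0 :: rev S.
have EA : A = rcons (belast r0 (rev S)) qq by rewrite /A /qq lastI.
have EXY : (r0 :: t1) ++ Y = A ++ [:: x0, w, q' & s2'].
  by rewrite /= -Ert /rt cat_rcons.
have HW'perm : perm_eq (r0 :: t1 ++ rev Y) (r0 :: rt).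
  by rewrite Ert perm_cons perm_cat2l perm_rev.
have HW'u : uniq (r0 :: t1 ++ rev Y) by rewrite (perm_uniq HW'perm).
have HW'sz : size (r0 :: t1 ++ rev Y) = #|V| by rewrite (perm_size HW'perm).
have NM : L0 != L x0 w by rewrite eq_sym.
have caseXA : r0 :: t1 = A -> Y = [:: x0, w, q' & s2'] -> PC_hamiltonian_cycle ends phi.
  move=> EX EY.
  apply: (GCtri vd ed (W1 := A ++ rev s2') (a1 := q') (a2 := w) (a3 := x0) (W2 := [::])
            HW'u HW'sz Hcyc).
    rewrite -cat_cons EX EY -catA.
    congr (_ ++ _).
    by rewrite -[[:: x0, w, q' & s2']]/([:: x0; w; q'] ++ s2') rev_cat.
  by rewrite Lst_sym Hwq Lst_sym.
case: (cat_split EXY) => [[m [EX EB]]|[m [EA' EY]]].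
- case: m EX EB => [|m1 [|m2 m']] EX EB.
  + by apply: caseXA; rewrite ?EX ?cats0 // EB.
  + case: EB => E1 E2.
    have El : last r0 t1 = x0.
      by rewrite E1; have := congr1 (last r0) EX; rewrite last_cat.
    by move: Hcond; rewrite -E2 El /= eqxx.
  + case: EB => E1 E2 E3.
    apply: (GCtri vd ed (W1 := belast r0 (rev S)) (a1 := qq) (a2 := x0) (a3 := w)
              (W2 := m' ++ rev Y) HW'u HW'sz Hcyc).
      by rewrite -[r0 :: t1 ++ rev Y]/((r0 :: t1) ++ rev Y) EX EA -E1 -E2 cat_rcons -catA.
    by rewrite Hqq.
- case/lastP: m EA' EY => [|m0 ml] EA' EY.
    by apply: caseXA; rewrite ?EA' ?cats0 // EY.
  have Eml : ml = qq.
    by move: EA'; rewrite EA -rcons_cat => /rcons_inj [_ ->].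
  apply: (GCtri vd ed (W1 := (r0 :: t1) ++ rev s2' ++ [:: q']) (a1 := w) (a2 := x0) (a3 := qq)
            (W2 := rev m0) HW'u HW'sz Hcyc).
    rewrite -[r0 :: t1 ++ rev Y]/((r0 :: t1) ++ rev Y) EY rev_cat Eml rev_rcons -catA.
    by congr (_ ++ _); rewrite !rev_cons -!cats1 -!catA.
  by rewrite Lst_sym [L x0 qq]Lst_sym Hqq eq_sym.
Qed.

End Final.


Theorem mainTheorem11 (V E : finType) (c : nat) (ends : E -> {set V})
    (phi : E -> 'I_c) :
  loopless ends ->
  (forall x : V, two_colors_at ends phi x) ->
  (forall x : V, #|V|.+1 <= 2 * delta_dym ends phi x) ->
  (exists x : V, three_colors_at ends phi x) ->
  PC_hamiltonian_cycle ends phi.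
Proof.
move=> Hll _ Hdeg [x0 [e1 [e2 [e3 [I1 I2 I3 /and3P [N12 N13 N23]]]]]].
have hdeg : forall x, #|V|.+1 <= 2 * #|[set y | dyn ends phi x y]| by move=> x; exact: Hdeg.
have dsym := dyn_sym ends phi.
have dirr := dyn_irr phi Hll.
pose vd := x0; pose ed := e1.
have Hn3 : 2 < #|V|.
  have H1 : #|x0 |: [set y | dyn ends phi x0 y]| <= #|V|.
    by rewrite -cardsT; apply: subset_leq_card; apply: subsetT.
  rewrite cardsU1 inE dirr /= in H1.
  move: H1 (hdeg x0); set n := #|V|; set k := #|[set y | _]|; lia.
have : 0 < #|[set y | dyn ends phi x0 y]| by have := hdeg x0; lia.
case/card_gt0P => u; rewrite inE => Hx0u.
have Hx0u' : x0 != u by apply: contraTneq Hx0u => <-; rewrite dirr.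
have [s [Hu Hsz Hl Hp]] := HC dsym dirr hdeg Hx0u'.
have Hne : s != [::] by case: (s) Hl => //= Eu; move: Hx0u'; rewrite Eu eqxx.
have Hcyc : cycle (dyn ends phi) (x0 :: s) by rewrite /= rcons_path Hp Hl dsym.
case: (walk_split ends phi x0 (rcons s x0)) => [[T1 [T2 [a1 [a2 [a3 [Ew N]]]]]]|Hall].
  case/lastP: T2 Ew => [|T2' l] Ew.
    move: Ew; rewrite -rcons_cons -[T1 ++ _]/(T1 ++ [:: a1; a2] ++ [:: a3]) catA cats1.
    case/rcons_inj => Ew Ea3.
    case: T1 Ew => [|t T1'] Ew.
      by move: Hn3; rewrite -Hsz Ew.
    case: Ew => Et Es.
    apply: (GCtri vd ed (W := rcons s x0) (W1 := T1') (a1 := a1) (a2 := a2) (a3 := x0)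
              (W2 := [::])).
    - by rewrite -rot1_cons rot_uniq.
    - by rewrite -rot1_cons size_rot.
    - by rewrite -rot1_cons rot_cycle.
    - by rewrite Es -cats1 -catA.
    - by rewrite Ea3.
  have : rcons (x0 :: s) x0 = rcons (T1 ++ [:: a1, a2, a3 & T2']) l by rewrite rcons_cons Ew rcons_cat.
  move/rcons_inj => [Ew' _].
  exact: (GCtri vd ed Hu Hsz Hcyc Ew' N).
have Hhd : head x0 (rcons s x0) = head x0 s by case: (s) Hne.
rewrite Hhd in Hall.
set L0 := Lst ends phi x0 (head x0 s) in Hall.
have Hq1 : dyn ends phi x0 (head x0 s) by case: (s) Hp Hne => //= y s' /andP [].
have HL0 : 1 < #|L0| := dyn_Lst Hq1.
have Hclose : Lst ends phi (last x0 s) x0 = L0.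
  apply: (Hall (last x0 s, x0)).
  by rewrite -cats1 cp_cat mem_cat mem_head orbT.
case: (ltnP 2 #|L0|) => H3.
  have : 0 < #|L0| by apply: ltnW.
  case/card_gt0P => c0 Hc0.
  apply: (GC vd ed (c0 := c0) Hu Hsz Hp Hne); first by rewrite Hclose.
  exact: cD2.
case: (boolP (odd #|V|)) => Hodd; last first.
  case/card_gt1P: HL0 => a [b [Ha Hb Hab]].
  apply: (GCeven vd ed Hu Hsz Hodd Hab) => pr Hpr.
  by rewrite (Hall _ Hpr) Ha Hb.
have [e [Ie Ne]] : exists e, x0 \in ends e /\ phi e \notin L0.
  case: (boolP (phi e1 \in L0)) => H1; last by exists e1.
  case: (boolP (phi e2 \in L0)) => H2; last by exists e2.
  case: (boolP (phi e3 \in L0)) => H3'; last by exists e3.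
  have : 2 < #|L0|.
    apply/card_gt2P; exists (phi e1), (phi e2), (phi e3); split; first by split.
    by split => //; rewrite eq_sym.
  by rewrite ltnNge H3.
have [y [Hy Ey]] : exists y, y != x0 /\ ends e = [set x0; y].
  have := Hll e; move/eqP/cards2P => [a [b [Hab Eab]]].
  move: Ie; rewrite Eab !inE => /orP [/eqP ->|/eqP ->].
    by exists b; rewrite eq_sym.
  by exists a; rewrite setUC.
have Hey : phi e \in Lst ends phi x0 y by apply: imset_f; rewrite inE Ey.
case: (boolP [exists w, dyn ends phi x0 w && (Lst ends phi x0 w != L0)]).
  case/existsP => w /andP [Hw Nw].
  exact: (case_a Hll hdeg vd ed Hu Hsz Hp Hall Hw Nw).
move=> Hnex.
have Hw : forall w, dyn ends phi x0 w -> Lst ends phi x0 w = L0.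
  move=> w Hw; apply/eqP; apply: contraNT Hnex => Nw.
  by apply/existsP; exists w; rewrite Hw.
have Hny : ~~ dyn ends phi x0 y.
  by apply/negP => /Hw E1; move: Ne; rewrite -E1 Hey.
have Hx0y : x0 != y by rewrite eq_sym.
have [s' [Hu' Hsz' Hl' Hp']] := HC dsym dirr hdeg Hx0y.
have Hne' : s' != [::] by case: (s') Hl' => //= Ey'; move: Hy; rewrite Ey' eqxx.
apply: (GC vd ed (c0 := phi e) Hu' Hsz' Hp' Hne').
  by rewrite Hl' Lst_sym.
have Hq1' : dyn ends phi x0 (head x0 s') by case: (s') Hp' Hne' => //= z s'' /andP [].
rewrite (Hw _ Hq1'); move: HL0; by rewrite (cardsD1 (phi e) L0) (negbTE Ne).
Qed.
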